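(* Let $G$ be an abelian Polish group, let $P\subseteq G$ be a perfect set and let $C\subseteq G$ be a comeager set. Then there exists $g\in G$ such that $|C\cap (g+P)|=\mathfrak{c}$.
   Context: $\mathfrak c$ denotes the cardinality of the continuum. *)

(* Defs.v *)
From Stdlib Require Import Reals.
From Stdlib Require Import ssreflect ssrfun.
Open Scope R_scope.

Record abgroup : Type := AbGroup {
  carrier :> Type;
  gzero : carrier;
  gadd : carrier -> carrier -> carrier;
  gopp : carrier -> carrier;
  gaddA : forall x y z, gadd x (gadd y z) = gadd (gadd x y) z;
  gaddC : forall x y, gadd x y = gadd y x;
  gadd0 : forall x, gadd gzero x = x;
  gaddN : forall x, gadd (gopp x) x = gzero
}.

Section MetricDefs.
Context {X : Type}.
Variable d : X -> X -> R.

Definition is_metric : Prop :=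
  (forall x y, 0 <= d x y) /\
  (forall x y, d x y = 0 <-> x = y) /\
  (forall x y, d x y = d y x) /\
  (forall x y z, d x z <= d x y + d y z).

Definition cauchy (u : nat -> X) : Prop :=
  forall eps, 0 < eps -> exists N, forall m n, (N <= m)%nat -> (N <= n)%nat ->
    d (u m) (u n) < eps.

Definition converges_to (u : nat -> X) (l : X) : Prop :=
  forall eps, 0 < eps -> exists N, forall n, (N <= n)%nat -> d (u n) l < eps.

Definition complete_metric : Prop :=
  forall u, cauchy u -> exists l, converges_to u l.

Definition dense (D : X -> Prop) : Prop :=
  forall x eps, 0 < eps -> exists y, D y /\ d x y < eps.

Definition separable_metric : Prop :=
  exists s : nat -> X, dense (fun y => exists n, y = s n).

Definition is_open (U : X -> Prop) : Prop :=
  forall x, U x -> exists eps, 0 < eps /\ forall y, d x y < eps -> U y.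

Definition is_closed (F : X -> Prop) : Prop := is_open (fun x => ~ F x).

Definition isolated_in (A : X -> Prop) (x : X) : Prop :=
  A x /\ exists eps, 0 < eps /\ forall y, A y -> d x y < eps -> y = x.

Definition perfect (P : X -> Prop) : Prop :=
  (exists x, P x) /\ is_closed P /\ forall x, ~ isolated_in P x.

Definition comeager (C : X -> Prop) : Prop :=
  exists U : nat -> X -> Prop,
    (forall n, is_open (U n) /\ dense (U n)) /\
    (forall x, (forall n, U n x) -> C x).
End MetricDefs.

Definition polish_group_metric (G : abgroup) (d : G -> G -> R) : Prop :=
  is_metric d /\ complete_metric d /\ separable_metric d /\
  (forall x y eps, 0 < eps -> exists delta, 0 < delta /\
     forall x' y', d x x' < delta -> d y y' < delta ->
       d (gadd G x y) (gadd G x' y') < eps) /\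
  (forall x eps, 0 < eps -> exists delta, 0 < delta /\
     forall x', d x x' < delta -> d (gopp G x) (gopp G x') < eps).

Definition translate (G : abgroup) (g : G) (P : G -> Prop) : G -> Prop :=
  fun x => exists p, P p /\ x = gadd G g p.

Definition has_card_continuum {X : Type} (S : X -> Prop) : Prop :=
  exists f : (nat -> bool) -> {x : X | S x}, bijective f.

(* Main.v *)
Require Import Defs.
From Stdlib Require Import Reals ZArith Lra Lia ClassicalEpsilon Classical FunctionalExtensionality Cantor ProofIrrelevance.
From Stdlib Require Import ssrfun.
Open Scope R_scope.

Lemma csb {A B : Type} (f : A -> B) (h : B -> A) :
  (forall x y, f x = f y -> x = y) -> (forall x y, h x = h y -> x = y) ->
  exists F : A -> B, bijective F.
Proof.
  intros Hf Hh.
  set (inC := fun a => exists n a0, ~ (exists b, h b = a0) /\ a = Nat.iter n (fun z => h (f z)) a0).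
  assert (Hinv : forall a, {b | (exists b', h b' = a) -> h b = a}).
  { intro a. apply constructive_indefinite_description.
    destruct (classic (exists b', h b' = a)) as [[b' Hb']|Hn].
    - exists b'. auto.
    - exists (f a). intro H; contradiction. }
  set (hinv := fun a => proj1_sig (Hinv a)).
  assert (Hhinv : forall a, (exists b', h b' = a) -> h (hinv a) = a).
  { intro a. unfold hinv. destruct (Hinv a); simpl; auto. }
  set (F := fun a => if excluded_middle_informative (inC a) then f a else hinv a).
  assert (Fin : forall a, ~ inC a -> exists b', h b' = a).
  { intros a Ha. apply NNPP. intro Hn. apply Ha. exists 0%nat, a. split; auto. }
  assert (Cstep : forall a, inC a -> inC (h (f a))).
  { intros a [n [a0 [H1 H2]]]. exists (S n), a0. split; auto. simpl. congruence. }
  assert (Finj : forall x y, F x = F y -> x = y).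
  { intros x y. unfold F.
    destruct (excluded_middle_informative (inC x)) as [Cx|Cx];
    destruct (excluded_middle_informative (inC y)) as [Cy|Cy]; intro E.
    - auto.
    - exfalso. apply Cy. rewrite <- (Hhinv y (Fin y Cy)). rewrite <- E. auto.
    - exfalso. apply Cx. rewrite <- (Hhinv x (Fin x Cx)). rewrite E. auto.
    - rewrite <- (Hhinv x (Fin x Cx)), <- (Hhinv y (Fin y Cy)). congruence. }
  assert (Fsurj : forall b, exists a, F a = b).
  { intro b. destruct (classic (inC (h b))) as [Cb|Cb].
    - destruct Cb as [n [a0 [H1 H2]]]. destruct n as [|n].
      + exfalso. apply H1. exists b. auto.
      + simpl in H2. apply Hh in H2.
        exists (Nat.iter n (fun z => h (f z)) a0). unfold F.
        destruct (excluded_middle_informative _) as [C|C]; auto.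
        exfalso. apply C. exists n, a0. auto.
    - exists (h b). unfold F.
      destruct (excluded_middle_informative _) as [C|C]; [contradiction|].
      apply Hh. apply Hhinv. exists b; auto. }
  exists F.
  set (G := fun b => proj1_sig (constructive_indefinite_description _ (Fsurj b))).
  assert (HG : forall b, F (G b) = b).
  { intro b. unfold G. destruct (constructive_indefinite_description _ _); auto. }
  apply (Bijective (g := G)).
  - intro a. apply Finj. apply HG.
  - intro b. apply HG.
Qed.
Lemma lim_le {X : Type} (d : X -> X -> R) (Hd : is_metric d) (u : nat -> X) (l a : X) (Rr : R) N :
  converges_to d u l -> (forall n, (N <= n)%nat -> d a (u n) <= Rr) -> d a l <= Rr.
Proof.
  intros Hc Hb. destruct Hd as [_ [_ [_ Ht]]].
  apply Rnot_lt_le. intro Hlt.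
  destruct (Hc (d a l - Rr)) as [M HM]; [lra|].
  specialize (HM (Nat.max N M) (Nat.le_max_r _ _)).
  specialize (Hb (Nat.max N M) (Nat.le_max_l _ _)).
  specialize (Ht a (u (Nat.max N M)) l). lra.
Qed.

Lemma closed_lim {X : Type} (d : X -> X -> R) (Hd : is_metric d) (P : X -> Prop) (u : nat -> X) l :
  is_closed d P -> (forall n, P (u n)) -> converges_to d u l -> P l.
Proof.
  intros Hcl HP Hc. apply NNPP. intro Hn.
  destruct (Hcl l Hn) as [e [He Hb]].
  destruct (Hc e He) as [N HN]. apply (Hb (u N)); auto.
  destruct Hd as [_ [_ [Hs _]]]. rewrite Hs. apply HN. lia.
Qed.

Lemma seq_conv {X : Type} (d : X -> X -> R) (Hd : is_metric d) (Hc : complete_metric d)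
  (u : nat -> X) (rho : nat -> R) :
  (forall k, 0 <= rho k) ->
  (forall k, d (u k) (u (S k)) + rho (S k) <= rho k) ->
  (forall k, rho (S k) <= rho k / 2) ->
  exists l, forall k, d (u k) l <= rho k.
Proof.
  intros Hpos H1 H2.
  assert (Hd' := Hd). destruct Hd' as [Hnn [Hz [Hs Ht]]].
  assert (A : forall n k, d (u k) (u (n + k)%nat) + rho (n + k)%nat <= rho k).
  { induction n; intro k.
    - simpl. assert (d (u k) (u k) = 0) by (apply Hz; auto). lra.
    - replace (S n + k)%nat with (n + S k)%nat by lia.
      specialize (IHn (S k)). specialize (H1 k).
      specialize (Ht (u k) (u (S k)) (u (n + S k)%nat)). lra. }
  assert (B : forall k, rho k <= rho 0%nat * (1/2) ^ k).
  { induction k.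
    - simpl. lra.
    - simpl. specialize (H2 k). lra. }
  assert (Cy : cauchy d u).
  { intros eps Heps.
    destruct (pow_lt_1_zero (1/2)) with (y := eps / (2 * (rho 0%nat + 1))) as [N HN].
    { rewrite Rabs_right; lra. }
    { apply Rdiv_lt_0_compat; [lra|]. specialize (Hpos 0%nat). lra. }
    exists N. intros m n Hm Hn.
    assert (Hr : rho N < eps / 2).
    { specialize (HN N (le_n _)). rewrite Rabs_right in HN.
      2: { apply Rle_ge. apply pow_le. lra. }
      specialize (B N). specialize (Hpos 0%nat).
      assert (rho 0%nat * (1/2)^N <= (rho 0%nat + 1) * (1/2)^N).
      { apply Rmult_le_compat_r; [apply pow_le; lra | lra]. }
      assert ((rho 0%nat + 1) * (1/2)^N < (rho 0%nat + 1) * (eps / (2 * (rho 0%nat + 1)))).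
      { apply Rmult_lt_compat_l; lra. }
      replace ((rho 0%nat + 1) * (eps / (2 * (rho 0%nat + 1)))) with (eps/2) in H0 by (field; lra).
      lra. }
    assert (E1 := A (m - N)%nat N). replace (m - N + N)%nat with m in E1 by lia.
    assert (E2 := A (n - N)%nat N). replace (n - N + N)%nat with n in E2 by lia.
    pose proof (Hpos m). pose proof (Hpos n).
    specialize (Ht (u m) (u N) (u n)). rewrite (Hs (u m) (u N)) in Ht. lra. }
  destruct (Hc u Cy) as [l Hl]. exists l. intro k.
  apply (lim_le d Hd u l (u k) (rho k) k Hl).
  intros n Hn. specialize (A (n - k)%nat k). replace (n - k + k)%nat with n in A by lia.
  specialize (Hpos n). lra.
Qed.

Lemma sep_inj {X : Type} (d : X -> X -> R) (Hd : is_metric d) :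
  separable_metric d -> exists F : X -> (nat -> bool), forall x y, F x = F y -> x = y.
Proof.
  intros [s Hs]. destruct Hd as [Hnn [Hz [Hsym Ht]]].
  exists (fun x k => let p := Cantor.of_nat k in
            if Rlt_dec (d x (s (fst p))) (/ (INR (snd p) + 1)) then true else false).
  intros x y E. apply NNPP. intro Hxy.
  set (r := d x y).
  assert (Hr : 0 < r).
  { destruct (Hnn x y); auto. exfalso. apply Hxy. apply Hz. auto. }
  destruct (archimed (2 / r)) as [Ha _].
  set (j := Z.to_nat (up (2 / r))).
  assert (Hj : / (INR j + 1) < r / 2).
  { assert (0 < 2 / r) by (apply Rdiv_lt_0_compat; lra).
    assert (INR j >= IZR (up (2/r))).
    { unfold j. rewrite INR_IZR_INZ. rewrite Z2Nat.id. lra.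
      apply le_IZR. lra. }
    assert (2 / r < INR j + 1) by lra.
    apply (Rmult_lt_compat_l (r / 2)) in H1; [|lra].
    replace (r / 2 * (2 / r)) with 1 in H1 by (field; lra).
    assert (0 < INR j + 1) by (pose proof (pos_INR j); lra).
    apply (Rmult_lt_reg_r (INR j + 1)); auto.
    rewrite Rinv_l; lra. }
  assert (Hjp : 0 < / (INR j + 1)).
  { apply Rinv_0_lt_compat. pose proof (pos_INR j); lra. }
  set (eta := Rmin (/ (INR j + 1)) (r - / (INR j + 1))).
  assert (Heta : 0 < eta) by (unfold eta; apply Rmin_glb_lt; lra).
  destruct (Hs x eta Heta) as [z [[n Hn] Hz']]. subst z.
  assert (F := f_equal (fun F => F (Cantor.to_nat (n, j))) E). cbv beta in F.
  rewrite Cantor.cancel_of_to in F. simpl in F.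
  assert (L1 : d x (s n) < / (INR j + 1)).
  { assert (eta <= / (INR j + 1)) by apply Rmin_l. lra. }
  assert (L2 : ~ d y (s n) < / (INR j + 1)).
  { assert (eta <= r - / (INR j + 1)) by apply Rmin_r.
    specialize (Ht x (s n) y). rewrite (Hsym (s n) y) in Ht. fold r in Ht. lra. }
  destruct (Rlt_dec (d x (s n)) _); destruct (Rlt_dec (d y (s n)) _); try discriminate; contradiction.
Qed.
Lemma open_inter {X : Type} (d : X -> X -> R) (A B : X -> Prop) :
  is_open d A -> is_open d B -> is_open d (fun x => A x /\ B x).
Proof.
  intros HA HB x [Ax Bx]. destruct (HA x Ax) as [e1 [He1 H1]]. destruct (HB x Bx) as [e2 [He2 H2]].
  exists (Rmin e1 e2). split. apply Rmin_glb_lt; auto.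
  intros y Hy. split. apply H1. assert (Rmin e1 e2 <= e1) by apply Rmin_l. lra.
  apply H2. assert (Rmin e1 e2 <= e2) by apply Rmin_r. lra.
Qed.

Lemma dense_inter {X : Type} (d : X -> X -> R) (Hd : is_metric d) (A B : X -> Prop) :
  is_open d A -> dense d A -> dense d B -> dense d (fun x => A x /\ B x).
Proof.
  intros HA DA DB x eps He. destruct Hd as [_ [_ [_ Ht]]].
  destruct (DA x (eps/2)) as [y [Ay Hy]]; [lra|].
  destruct (HA y Ay) as [e1 [He1 H1]].
  destruct (DB y (Rmin e1 (eps/2))) as [z [Bz Hz]]. apply Rmin_glb_lt; lra.
  exists z. assert (Rmin e1 (eps/2) <= e1) by apply Rmin_l.
  assert (Rmin e1 (eps/2) <= eps/2) by apply Rmin_r.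
  split. split; auto. apply H1. lra. specialize (Ht x y z). lra.
Qed.

Lemma V_props {X : Type} (d : X -> X -> R) (Hd : is_metric d) (U : nat -> X -> Prop) :
  (forall n, is_open d (U n) /\ dense d (U n)) ->
  forall j, is_open d (fun x => forall i, (i <= j)%nat -> U i x) /\
            dense d (fun x => forall i, (i <= j)%nat -> U i x).
Proof.
  intros HU. induction j.
  - destruct (HU 0%nat) as [O D]. split.
    + intros x Hx. destruct (O x (Hx 0%nat (le_n _))) as [e [He H]]. exists e. split; auto.
      intros y Hy i Hi. replace i with 0%nat by lia. auto.
    + intros x eps He. destruct (D x eps He) as [y [Hy1 Hy2]]. exists y. split; auto.
      intros i Hi. replace i with 0%nat by lia. auto.
  - destruct IHj as [O D]. destruct (HU (S j)) as [O' D'].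
    assert (E : forall x, (forall i, (i <= S j)%nat -> U i x) <-> ((forall i, (i <= j)%nat -> U i x) /\ U (S j) x)).
    { intro x. split.
      - intro H. split; auto.
      - intros [H1 H2] i Hi. destruct (Nat.eq_dec i (S j)). subst; auto. apply H1. lia. }
    split.
    + intros x Hx. apply E in Hx. destruct (open_inter d _ _ O O' x Hx) as [e [He H]].
      exists e. split; auto. intros y Hy. apply E. auto.
    + intros x eps He. destruct (dense_inter d Hd _ _ O D D' x eps He) as [y [Hy1 Hy2]].
      exists y. split; auto. apply E; auto.
Qed.

Lemma split_pt {X : Type} (d : X -> X -> R) (Hd : is_metric d) (P : X -> Prop) :
  (forall x, ~ isolated_in d P x) -> forall p rho, P p -> 0 < rho ->
  exists a, P a /\ 0 < d p a /\ d p a < rho.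
Proof.
  intros Hni p rho Hp Hr. apply NNPP. intro Hn. apply (Hni p). split; auto.
  exists rho. split; auto. intros y Hy Hdy. apply NNPP. intro Hne. apply Hn.
  exists y. split; auto. split; auto.
  destruct Hd as [Hnn [Hz _]]. destruct (Hnn p y); auto. exfalso. apply Hne.
  symmetry. apply Hz. auto.
Qed.

Lemma proc (G : abgroup) (d : G -> G -> R) (Hd : is_metric d)
  (Hadd : forall x y eps, 0 < eps -> exists delta, 0 < delta /\
     forall x' y', d x x' < delta -> d y y' < delta ->
       d (gadd G x y) (gadd G x' y') < eps)
  (V : G -> Prop) : is_open d V -> dense d V ->
  forall q g0 dl0, 0 < dl0 -> exists g1 dl1 r1, 0 < dl1 /\ 0 < r1 /\
    d g0 g1 + dl1 <= dl0 /\ dl1 <= dl0 / 2 /\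
    forall g' p', d g1 g' <= dl1 -> d q p' <= r1 -> V (gadd G g' p').
Proof.
  intros HO HD q g0 dl0 Hdl. destruct Hd as [Hnn [Hz [Hs Ht]]].
  destruct (Hadd (gadd G g0 q) (gopp G q) (dl0/2)) as [eta [Heta Hc]]; [lra|].
  destruct (HD (gadd G g0 q) eta Heta) as [h [Vh Hh]].
  destruct (HO h Vh) as [e [He Hball]].
  set (g1 := gadd G h (gopp G q)).
  assert (E1 : gadd G (gadd G g0 q) (gopp G q) = g0).
  { rewrite <- gaddA. rewrite (gaddC G q). rewrite gaddN. rewrite gaddC. apply gadd0. }
  assert (E2 : gadd G g1 q = h).
  { unfold g1. rewrite <- gaddA. rewrite gaddN. rewrite gaddC. apply gadd0. }
  assert (Hg : d g0 g1 < dl0 / 2).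
  { rewrite <- E1 at 1. unfold g1. apply Hc; auto.
    assert (d (gopp G q) (gopp G q) = 0) by (apply Hz; auto). lra. }
  destruct (Hadd g1 q e He) as [de [Hde Hc2]].
  exists g1, (Rmin (de/2) (dl0/2)), (de/2).
  assert (Rmin (de/2) (dl0/2) <= de/2) by apply Rmin_l.
  assert (Rmin (de/2) (dl0/2) <= dl0/2) by apply Rmin_r.
  split. apply Rmin_glb_lt; lra. split. lra. split. lra. split. lra.
  intros g' p' H1 H2. apply Hball. rewrite <- E2. apply Hc2; lra.
Qed.
Record st (X : Type) := mkst { sc : X; sr : R; sg : X; sd : R }.
Arguments mkst {X}. Arguments sc {X}. Arguments sr {X}. Arguments sg {X}. Arguments sd {X}.

Definition step {X : Type} (d : X -> X -> R) (splitf : X -> R -> X)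
  (procf : nat -> X -> X -> R -> X * R * R) (par prev : st X) (right : bool) (m : nat) : st X :=
  let a := splitf (sc par) (sr par / 4) in
  let D := d (sc par) a in
  let q := if right then a else sc par in
  let t := procf m q (sg prev) (sd prev) in
  mkst q (Rmin (snd t) (D / 3)) (fst (fst t)) (snd (fst t)).

Fixpoint hist {X : Type} (d : X -> X -> R) (splitf : X -> R -> X)
  (procf : nat -> X -> X -> R -> X * R * R) (s0 : st X) (n : nat) : nat -> st X :=
  match n with
  | O => fun _ => step d splitf procf s0 s0 false 0
  | S n => fun i => if Nat.leb i n then hist d splitf procf s0 n i
            else step d splitf procf (hist d splitf procf s0 n (Nat.div2 n))
                      (hist d splitf procf s0 n n) (Nat.odd n) (S n)
  end.

Lemma hist_unfold {X : Type} d splitf procf (s0 : st X) n i :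
  hist d splitf procf s0 (S n) i = if Nat.leb i n then hist d splitf procf s0 n i
            else step d splitf procf (hist d splitf procf s0 n (Nat.div2 n))
                      (hist d splitf procf s0 n n) (Nat.odd n) (S n).
Proof. reflexivity. Qed.

Lemma hist_stable {X : Type} d splitf procf (s0 : st X) :
  forall n i, (i <= n)%nat -> hist d splitf procf s0 n i = hist d splitf procf s0 i i.
Proof.
  induction n; intros i Hi.
  - replace i with 0%nat by lia. reflexivity.
  - change (hist d splitf procf s0 (S n) i) with (if Nat.leb i n then hist d splitf procf s0 n i
            else step d splitf procf (hist d splitf procf s0 n (Nat.div2 n))
                      (hist d splitf procf s0 n n) (Nat.odd n) (S n)).
    destruct (Nat.leb i n) eqn:E.
    + apply Nat.leb_le in E. apply IHn; auto.
    + apply Nat.leb_gt in E. replace i with (S n) by lia. rewrite hist_unfold.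
      replace (Nat.leb (S n) n) with false by (symmetry; apply Nat.leb_gt; lia). reflexivity.
Qed.

Lemma hist_S {X : Type} d splitf procf (s0 : st X) n :
  hist d splitf procf s0 (S n) (S n) =
  step d splitf procf (hist d splitf procf s0 (Nat.div2 n) (Nat.div2 n))
     (hist d splitf procf s0 n n) (Nat.odd n) (S n).
Proof.
  change (hist d splitf procf s0 (S n) (S n)) with (if Nat.leb (S n) n then hist d splitf procf s0 n (S n)
            else step d splitf procf (hist d splitf procf s0 n (Nat.div2 n))
                      (hist d splitf procf s0 n n) (Nat.odd n) (S n)).
  replace (Nat.leb (S n) n) with false by (symmetry; apply Nat.leb_gt; lia).
  rewrite hist_stable; auto. apply Nat.le_div2_diag_l.
Qed.

Fixpoint nd (x : nat -> bool) (k : nat) : nat :=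
  match k with O => O | S k => S (2 * nd x k + (if x k then 1 else 0)) end.

Lemma nd_ge x k : (k <= nd x k)%nat.
Proof. induction k; simpl; [lia|]. destruct (x k); lia. Qed.

Lemma div2_odd_b n (b : bool) : Nat.div2 (2 * n + (if b then 1 else 0)) = n /\
   Nat.odd (2 * n + (if b then 1 else 0)) = b.
Proof.
  assert (E := Nat.div2_odd (2 * n + (if b then 1 else 0))).
  destruct b.
  - assert (O : Nat.odd (2 * n + 1) = true) by apply Nat.odd_odd.
    rewrite O in E. cbn [Nat.b2n] in E. split; auto. lia.
  - rewrite Nat.add_0_r in *. assert (O : Nat.odd (2 * n) = false) by apply Nat.odd_even.
    rewrite O in E. cbn [Nat.b2n] in E. split; auto. lia.
Qed.

Lemma nd_agree x y k : (forall j, (j < k)%nat -> x j = y j) -> nd x k = nd y k.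
Proof.
  induction k; intro H; simpl; auto.
  rewrite IHk by (intros; apply H; lia). rewrite (H k) by lia. reflexivity.
Qed.
Definition Inv {X : Type} (P : X -> Prop) (s : st X) := P (sc s) /\ 0 < sr s /\ 0 < sd s.

Lemma step_spec (G : abgroup) (d : G -> G -> R) (Hd : is_metric d) (P : G -> Prop)
  (V : nat -> G -> Prop) splitf procf
  (Hsplit : forall p rho, P p -> 0 < rho -> P (splitf p rho) /\ 0 < d p (splitf p rho) /\ d p (splitf p rho) < rho)
  (Hproc : forall m q g0 dl0, 0 < dl0 -> 0 < snd (fst (procf m q g0 dl0)) /\ 0 < snd (procf m q g0 dl0) /\
     d g0 (fst (fst (procf m q g0 dl0))) + snd (fst (procf m q g0 dl0)) <= dl0 /\
     snd (fst (procf m q g0 dl0)) <= dl0 / 2 /\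
     forall g' p', d (fst (fst (procf m q g0 dl0))) g' <= snd (fst (procf m q g0 dl0)) ->
        d q p' <= snd (procf m q g0 dl0) -> V m (gadd G g' p'))
  par prev b m :
  Inv P par -> Inv P prev ->
  let a := splitf (sc par) (sr par / 4) in
  let s := step d splitf procf par prev b m in
  Inv P s /\ sc s = (if b then a else sc par) /\ sr s <= d (sc par) a / 3 /\
  0 < d (sc par) a /\ d (sc par) a < sr par / 4 /\
  d (sg prev) (sg s) + sd s <= sd prev /\ sd s <= sd prev / 2 /\
  forall g' p', d (sg s) g' <= sd s -> d (sc s) p' <= sr s -> V m (gadd G g' p').
Proof.
  intros [Pp [Rp Dp]] [Pq [Rq Dq]] a s.
  destruct (Hsplit (sc par) (sr par / 4) Pp) as [Pa [Da1 Da2]]; [lra|].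
  fold a in Pa, Da1, Da2.
  destruct (Hproc m (if b then a else sc par) (sg prev) (sd prev) Dq) as [H1 [H2 [H3 [H4 H5]]]].
  assert (Hmin1 : Rmin (snd (procf m (if b then a else sc par) (sg prev) (sd prev))) (d (sc par) a / 3)
     <= snd (procf m (if b then a else sc par) (sg prev) (sd prev))) by apply Rmin_l.
  assert (Hmin2 : Rmin (snd (procf m (if b then a else sc par) (sg prev) (sd prev))) (d (sc par) a / 3)
     <= d (sc par) a / 3) by apply Rmin_r.
  unfold s, step. fold a. cbn [sc sr sg sd].
  split; [split; [destruct b; auto|split]|].
  - apply Rmin_glb_lt; lra.
  - auto.
  - split. reflexivity. split. lra. split. lra. split. lra. split. exact H3. split. exact H4.
    intros g' p' Hg Hp. apply H5; auto. lra.
Qed.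

Lemma construct (G : abgroup) (d : G -> G -> R) (Hd : is_metric d) (Hc : complete_metric d)
  (Hadd : forall x y eps, 0 < eps -> exists delta, 0 < delta /\
     forall x' y', d x x' < delta -> d y y' < delta ->
       d (gadd G x y) (gadd G x' y') < eps)
  (P : G -> Prop) (HP : perfect d P) (V : nat -> G -> Prop)
  (HV : forall m, is_open d (V m) /\ dense d (V m)) :
  exists g (F : (nat -> bool) -> G), (forall x y, F x = F y -> x = y) /\
    forall x, P (F x) /\ forall k, exists m, (k <= m)%nat /\ V m (gadd G g (F x)).
Proof.
  destruct HP as [[p0 Hp0] [Hcl Hni]].
  assert (SP : forall p rho, {a | P p -> 0 < rho -> P a /\ 0 < d p a /\ d p a < rho}).
  { intros p rho. apply constructive_indefinite_description.
    destruct (classic (P p /\ 0 < rho)) as [[H1 H2]|Hn].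
    - destruct (split_pt d Hd P Hni p rho H1 H2) as [a Ha]. exists a. auto.
    - exists p. intros H1 H2. exfalso. auto. }
  set (splitf := fun p rho => proj1_sig (SP p rho)).
  assert (Hsplit : forall p rho, P p -> 0 < rho -> P (splitf p rho) /\ 0 < d p (splitf p rho) /\ d p (splitf p rho) < rho).
  { intros p rho. unfold splitf. destruct (SP p rho); auto. }
  assert (PR : forall m q g0 dl0, {t : G * R * R | 0 < dl0 -> 0 < snd (fst t) /\ 0 < snd t /\
     d g0 (fst (fst t)) + snd (fst t) <= dl0 /\ snd (fst t) <= dl0 / 2 /\
     forall g' p', d (fst (fst t)) g' <= snd (fst t) -> d q p' <= snd t -> V m (gadd G g' p')}).
  { intros m q g0 dl0. apply constructive_indefinite_description.
    destruct (Rlt_dec 0 dl0) as [H|H].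
    - destruct (HV m) as [O D].
      destruct (proc G d Hd Hadd (V m) O D q g0 dl0 H) as [g1 [dl1 [r1 Hh]]].
      exists (g1, dl1, r1). intros _. exact Hh.
    - exists (g0, 0, 0). intro; contradiction. }
  set (procf := fun m q g0 dl0 => proj1_sig (PR m q g0 dl0)).
  assert (Hproc : forall m q g0 dl0, 0 < dl0 -> 0 < snd (fst (procf m q g0 dl0)) /\ 0 < snd (procf m q g0 dl0) /\
     d g0 (fst (fst (procf m q g0 dl0))) + snd (fst (procf m q g0 dl0)) <= dl0 /\
     snd (fst (procf m q g0 dl0)) <= dl0 / 2 /\
     forall g' p', d (fst (fst (procf m q g0 dl0))) g' <= snd (fst (procf m q g0 dl0)) ->
        d q p' <= snd (procf m q g0 dl0) -> V m (gadd G g' p')).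
  { intros m q g0 dl0. unfold procf. destruct (PR m q g0 dl0); auto. }
  set (s0 := mkst p0 4 (gzero G) 1).
  set (H := fun i => hist d splitf procf s0 i i).
  assert (SS := step_spec G d Hd P V splitf procf Hsplit Hproc).
  assert (HS : forall n, H (S n) = step d splitf procf (H (Nat.div2 n)) (H n) (Nat.odd n) (S n)).
  { intro n. unfold H. apply hist_S. }
  assert (H0 : H 0%nat = step d splitf procf s0 s0 false 0).
  { reflexivity. }
  assert (I0 : Inv P s0). { unfold Inv, s0; simpl. split; auto. lra. }
  assert (Inv_all : forall n, Inv P (H n)).
  { intro n. induction n as [n IH] using (well_founded_induction lt_wf).
    destruct n as [|n].
    - rewrite H0. apply (SS s0 s0 false 0%nat I0 I0).
    - rewrite HS. apply SS; apply IH.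
      + assert (Nat.div2 n <= n)%nat by apply Nat.le_div2_diag_l. lia.
      + lia. }
  assert (Hg : exists g, forall i, d (sg (H i)) g <= sd (H i)).
  { apply (seq_conv d Hd Hc (fun i => sg (H i)) (fun i => sd (H i))).
    - intro k. destruct (Inv_all k) as [_ [_ D]]. lra.
    - intro k. rewrite HS. apply SS; apply Inv_all.
    - intro k. rewrite HS. apply SS; apply Inv_all. }
  destruct Hg as [g Hg]. exists g.
  assert (Br : forall x k, H (nd x (S k)) =
     step d splitf procf (H (nd x k)) (H (2 * nd x k + (if x k then 1 else 0))%nat) (x k)
        (S (2 * nd x k + (if x k then 1 else 0)))).
  { intros x k. cbn [nd]. rewrite HS.
    destruct (div2_odd_b (nd x k) (x k)) as [E1 E2]. rewrite E1, E2. reflexivity. }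
  assert (Lim : forall x, exists l, forall k, d (sc (H (nd x k))) l <= sr (H (nd x k))).
  { intro x. apply (seq_conv d Hd Hc (fun k => sc (H (nd x k))) (fun k => sr (H (nd x k)))).
    - intro k. destruct (Inv_all (nd x k)) as [_ [R _]]. lra.
    - intro k. rewrite Br.
      destruct (SS (H (nd x k)) (H (2 * nd x k + (if x k then 1 else 0))%nat) (x k)
        (S (2 * nd x k + (if x k then 1 else 0))) (Inv_all _) (Inv_all _))
        as [_ [Ec [Er [Dp1 [Dp2 _]]]]].
      rewrite Ec. destruct (x k).
      + lra.
      + destruct Hd as [_ [Hz _]]. assert (Z : d (sc (H (nd x k))) (sc (H (nd x k))) = 0) by (apply Hz; auto).
        rewrite Z. lra.
    - intro k. rewrite Br.
      destruct (SS (H (nd x k)) (H (2 * nd x k + (if x k then 1 else 0))%nat) (x k)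
        (S (2 * nd x k + (if x k then 1 else 0))) (Inv_all _) (Inv_all _))
        as [_ [Ec [Er [Dp1 [Dp2 _]]]]]. lra. }
  set (F := fun x => proj1_sig (constructive_indefinite_description _ (Lim x))).
  assert (HF : forall x k, d (sc (H (nd x k))) (F x) <= sr (H (nd x k))).
  { intros x k. unfold F. destruct (constructive_indefinite_description _ _); simpl; auto. }
  exists F. split.
  - intros x y Exy. apply NNPP. intro Hne.
    assert (Hk : exists k, (forall j, (j < k)%nat -> x j = y j) /\ x k <> y k).
    { apply NNPP. intro Hn. apply Hne. apply functional_extensionality.
      assert (A : forall k, forall j, (j < k)%nat -> x j = y j).
      { induction k; intros j Hj. lia.
        destruct (Nat.eq_dec j k). subst j. apply NNPP. intro Hxy. apply Hn. exists k. split; auto.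
        apply IHk. lia. }
      intro j. apply (A (S j)). lia. }
    destruct Hk as [k [Hagr Hdif]].
    assert (En := nd_agree x y k Hagr).
    set (n := nd x k) in *.
    set (a := splitf (sc (H n)) (sr (H n) / 4)).
    assert (Ex := HF x (S k)). assert (Ey := HF y (S k)). rewrite Exy in Ex.
    rewrite Br in Ex, Ey. fold n in Ex. rewrite <- En in Ey. fold n in Ey.
    destruct (SS (H n) (H (2 * n + (if x k then 1 else 0))%nat) (x k)
        (S (2 * n + (if x k then 1 else 0))) (Inv_all _) (Inv_all _))
        as [_ [Ecx [Erx [Dp1 [Dp2 _]]]]].
    destruct (SS (H n) (H (2 * n + (if y k then 1 else 0))%nat) (y k)
        (S (2 * n + (if y k then 1 else 0))) (Inv_all _) (Inv_all _))
        as [_ [Ecy [Ery _]]].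
    fold a in Ecx, Erx, Dp1, Dp2, Ecy, Ery.
    rewrite Ecx in Ex. rewrite Ecy in Ey.
    destruct Hd as [_ [_ [Hs Ht]]].
    destruct (x k), (y k); try congruence.
    + pose proof (Ht (sc (H n)) (F y) a). pose proof (Hs (F y) a). lra.
    + pose proof (Ht (sc (H n)) (F y) a). pose proof (Hs (F y) a). lra.
  - intro x. split.
    + apply (closed_lim d Hd P (fun k => sc (H (nd x k))) (F x) Hcl).
      * intro k. apply Inv_all.
      * intros eps Heps.
        destruct (pow_lt_1_zero (1/2)) with (y := eps / (sr (H 0%nat) + 1)) as [N HN].
        { rewrite Rabs_right; lra. }
        { apply Rdiv_lt_0_compat; [lra|]. destruct (Inv_all 0%nat) as [_ [R _]]. lra. }
        exists N. intros n Hn.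
        assert (B : forall k, sr (H (nd x k)) <= sr (H 0%nat) * (1/2)^k).
        { induction k.
          - simpl. lra.
          - rewrite Br.
            destruct (SS (H (nd x k)) (H (2 * nd x k + (if x k then 1 else 0))%nat) (x k)
              (S (2 * nd x k + (if x k then 1 else 0))) (Inv_all _) (Inv_all _))
              as [_ [Ec [Er [Dp1 [Dp2 _]]]]].
            change ((1/2)^(S k)) with ((1/2) * (1/2)^k). lra. }
        specialize (HN n Hn). rewrite Rabs_right in HN by (apply Rle_ge; apply pow_le; lra).
        assert (R0 : 0 < sr (H 0%nat)) by apply Inv_all.
        assert ((sr (H 0%nat) + 1) * (1/2)^n < (sr (H 0%nat) + 1) * (eps / (sr (H 0%nat) + 1))).
        { apply Rmult_lt_compat_l; lra. }
        replace ((sr (H 0%nat) + 1) * (eps / (sr (H 0%nat) + 1))) with eps in H1 by (field; lra).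
        assert (sr (H 0%nat) * (1/2)^n <= (sr (H 0%nat) + 1) * (1/2)^n).
        { apply Rmult_le_compat_r; [apply pow_le; lra | lra]. }
        specialize (B n). specialize (HF x n). lra.
    + intro k. exists (nd x k). split. apply nd_ge.
      assert (Hn : forall m, exists s, H m = s). { intro m; eauto. }
      destruct (nd x k) as [|m] eqn:Em.
      * destruct (SS s0 s0 false 0%nat I0 I0) as [_ [_ [_ [_ [_ [_ [_ Hv]]]]]]].
        apply Hv. rewrite <- H0. apply Hg. rewrite <- H0. rewrite <- Em. apply HF.
      * destruct (SS (H (Nat.div2 m)) (H m) (Nat.odd m) (S m) (Inv_all _) (Inv_all _))
          as [_ [_ [_ [_ [_ [_ [_ Hv]]]]]]].
        apply Hv. rewrite <- HS. apply Hg. rewrite <- HS. rewrite <- Em. apply HF.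
Qed.

Theorem lemma3p4 (G : abgroup) (d : G -> G -> R)
  (HG : polish_group_metric G d) (P C : G -> Prop)
  (HP : perfect d P) (HC : comeager d C) :
  exists g : G, has_card_continuum (fun x => C x /\ translate G g P x).
Proof.
  destruct HG as [Hd [Hc [Hsep [Hadd _]]]].
  destruct HC as [U [HU HUC]].
  assert (HV := V_props d Hd U HU).
  destruct (construct G d Hd Hc Hadd P HP _ HV) as [g [F [Finj HF]]].
  exists g. unfold has_card_continuum.
  assert (Hs : forall x, C (gadd G g (F x)) /\ translate G g P (gadd G g (F x))).
  { intro x. destruct (HF x) as [HPx Hk]. split.
    - apply HUC. intro n. destruct (Hk n) as [m [Hm Vm]]. apply Vm. auto.
    - exists (F x). auto. }
  set (f := fun x => exist (fun z => C z /\ translate G g P z) (gadd G g (F x)) (Hs x)).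
  destruct (sep_inj d Hd Hsep) as [enc Henc].
  set (h := fun z : {z | C z /\ translate G g P z} => enc (proj1_sig z)).
  apply (csb f h).
  - intros x y E. unfold f in E. injection E as E.
    apply Finj.
    assert (E2 := f_equal (gadd G (gopp G g)) E).
    rewrite !gaddA, gaddN, !gadd0 in E2. auto.
  - intros [z1 p1] [z2 p2] E. unfold h in E. simpl in E. apply Henc in E. subst z2.
    f_equal. apply proof_irrelevance.
Qed.
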